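(* Let $X$ and $Y$ be quasi-isometric semimetric spaces. If $X$ is quasi-metric, then $Y$ is quasi-metric.
   Context: A semimetric space is a set $X$ with $d:X\times X\to\mathbb{R}^{\ge0}\cup\{\infty\}$ such that $d(x,y)=0$ iff $x=y$ and $d(x,z)\le d(x,y)+d(y,z)$ (no symmetry; $\infty$ absorbs addition and multiplication by positive reals). It is strongly connected if $d(x,y)<\infty$ for all $x,y$, and quasi-metric if it is strongly connected and there exist $1\le\lambda<\infty$, $0\le\epsilon<\infty$ with $d(y,x)\le\lambda d(x,y)+\epsilon$ for all $x,y$. A map $f:X\to X'$ is a quasi-isometry if there are $1\le\lambda<\infty$, $0<\epsilon<\infty$, $0\le\mu<\infty$ with $\frac1\lambda d(x,y)-\epsilon\le d'(f(x),f(y))\le\lambda d(x,y)+\epsilon$ for all $x,y$, and for every $x'\in X'$ some $x\in X$ with $\max(d'(x',f(x)),d'(f(x),x'))\le\mu$; $X$ and $X'$ are quasi-isometric if such a map exists. *)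

(* Defs.v *)
(* concrete reals R. Extended nonnegative reals [0,oo] are
   modelled as [option R]: [Some r] is the finite value r (required >= 0),
   [None] is +oo. *)
From Stdlib Require Import Reals.
Open Scope R_scope.

Set Implicit Arguments.
Definition ER := option R.

Definition eadd (a b : ER) : ER :=
  match a, b with Some x, Some y => Some (x + y) | _, _ => None end.

Definition escale (l : R) (a : ER) : ER :=
  match a with Some x => Some (l * x) | None => None end.

Definition ele (a b : ER) : Prop :=
  match a, b with
  | _, None => True
  | None, Some _ => False
  | Some x, Some y => x <= y
  end.

Definition efinite (a : ER) : Prop := a <> None.

Record semimetric (X : Type) (d : X -> X -> ER) : Prop := {
  sm_nonneg : forall x y r, d x y = Some r -> 0 <= r;
  sm_zero : forall x y, d x y = Some 0 <-> x = y;
  sm_triangle : forall x y z, ele (d x z) (eadd (d x y) (d y z))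
}.

Definition strongly_connected (X : Type) (d : X -> X -> ER) : Prop :=
  forall x y, efinite (d x y).

Definition quasi_metric (X : Type) (d : X -> X -> ER) : Prop :=
  strongly_connected d /\
  exists lam eps : R, 1 <= lam /\ 0 <= eps /\
    forall x y, ele (d y x) (eadd (escale lam (d x y)) (Some eps)).

(* (1/lam) d(x,y) - eps <= d'(f x, f y), written as
   (1/lam) d(x,y) <= d'(f x, f y) + eps to avoid oo - eps. *)
Definition quasi_isometry (X Y : Type) (d : X -> X -> ER) (d' : Y -> Y -> ER)
  (f : X -> Y) : Prop :=
  exists lam eps mu : R, 1 <= lam /\ 0 < eps /\ 0 <= mu /\
    (forall x y,
        ele (escale (/ lam) (d x y)) (eadd (d' (f x) (f y)) (Some eps)) /\
        ele (d' (f x) (f y)) (eadd (escale lam (d x y)) (Some eps))) /\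
    (forall y : Y, exists x : X,
        ele (d' y (f x)) (Some mu) /\ ele (d' (f x) y) (Some mu)).

Definition quasi_isometric (X Y : Type) (d : X -> X -> ER) (d' : Y -> Y -> ER)
  : Prop := exists f : X -> Y, quasi_isometry d d' f.

(* Main.v *)
Require Import Defs.
From Stdlib Require Import Reals Lra Psatz.
Open Scope R_scope.

Theorem corollary2p11 (X Y : Type) (dX : X -> X -> ER) (dY : Y -> Y -> ER) :
  semimetric dX -> semimetric dY ->
  quasi_isometric dX dY ->
  quasi_metric dX -> quasi_metric dY.
Proof.
  intros SX SY [f [L [e [mu [HL [He [Hmu [Hqi Hsurj]]]]]]]] [SCX [a [b [Ha [Hb Hsym]]]]].
  assert (SCY : strongly_connected dY).
  { intros y1 y2.
    destruct (Hsurj y1) as [x1 [A1 B1]], (Hsurj y2) as [x2 [A2 B2]].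
    pose proof (sm_triangle SY y1 (f x1) y2) as T1.
    pose proof (sm_triangle SY (f x1) (f x2) y2) as T2.
    destruct (Hqi x1 x2) as [_ U]. pose proof (SCX x1 x2) as F.
    unfold efinite in *.
    destruct (dX x1 x2); [|congruence].
    destruct (dY y1 y2); [discriminate|].
    destruct (dY y1 (f x1)); destruct (dY (f x1) y2); destruct (dY (f x1) (f x2));
    destruct (dY (f x2) y2); simpl in *; tauto. }
  split; [exact SCY|].
  exists (L*L*a), (2*mu+e + L*L*a*(2*mu+e) + L*b).
  assert (1 <= L*L) by nra. assert (1 <= L*L*a) by nra. split; [lra|]. split; [nra|].
  intros y1 y2.
  destruct (Hsurj y1) as [x1 [A1 B1]], (Hsurj y2) as [x2 [A2 B2]].
  pose proof (sm_triangle SY y2 (f x2) y1) as T3.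
  pose proof (sm_triangle SY (f x2) (f x1) y1) as T4.
  destruct (Hqi x2 x1) as [_ U].
  pose proof (Hsym x1 x2) as S.
  destruct (Hqi x1 x2) as [Lo _].
  pose proof (sm_triangle SY (f x1) y1 (f x2)) as T5.
  pose proof (sm_triangle SY y1 y2 (f x2)) as T6.
  pose proof (SCX x1 x2) as F1. pose proof (SCX x2 x1) as F2.
  pose proof (SCY y1 y2) as G1. pose proof (SCY y2 y1) as G2.
  pose proof (SCY y2 (f x2)) as G3. pose proof (SCY (f x2) y1) as G4.
  pose proof (SCY (f x2) (f x1)) as G5. pose proof (SCY (f x1) y1) as G6.
  pose proof (SCY (f x1) (f x2)) as G7. pose proof (SCY y1 (f x2)) as G8.
  pose proof (SCY y1 (f x1)) as G9. pose proof (SCY (f x2) y2) as G10.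
  unfold efinite in *.
  destruct (dX x1 x2) as [p|]; [|congruence].
  destruct (dX x2 x1) as [q|]; [|congruence].
  destruct (dY y1 y2) as [r|]; [|congruence].
  destruct (dY y2 y1) as [s|]; [|congruence].
  destruct (dY y2 (f x2)) as [t1|]; [|congruence].
  destruct (dY (f x2) y1) as [t2|]; [|congruence].
  destruct (dY (f x2) (f x1)) as [t3|]; [|congruence].
  destruct (dY (f x1) y1) as [t4|]; [|congruence].
  destruct (dY (f x1) (f x2)) as [t5|]; [|congruence].
  destruct (dY y1 (f x2)) as [t6|]; [|congruence].
  destruct (dY y1 (f x1)) as [t7|]; [|congruence].
  destruct (dY (f x2) y2) as [t8|]; [|congruence].
  simpl in *.
  assert (Hp : p <= L * (t5 + e)).
  { assert (HL0 : 0 < L) by lra.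
    replace p with (L * (/L * p)) by (field; lra).
    apply Rmult_le_compat_l; lra. }
  assert (Hq : q <= a * (L * (r + 2*mu + e)) + b).
  { assert (p <= L * (r + 2*mu + e)) by nra. nra. }
  assert (L * q <= L * (a * (L * (r + 2*mu + e)) + b)) by nra.
  nra.
Qed.
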